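(* Let $\ell\in\{\ell_{lin},\ell_{log}\}$ and let $L_f$ be the strong smoothness constant of $f$ defined below. (i) If $\beta^*$ is an $\alpha$-stationary point of (SCL) for some $\alpha>0$, then $\beta^*$ is a local minimizer of (SCL); if moreover $\|\beta_1^*\|_0<s_1$ and $\|\beta_2^*\|_0<s_2$, then $\beta^*$ is a global minimizer of (SCL). (ii) Conversely, if $\beta^*$ is a global minimizer of (SCL), then $\beta^*$ is an $\alpha$-stationary point of (SCL) for every $0<\alpha<1/L_f$.
   Context: Data: $X\in\mathbb{R}^{n\times p_1}$, $Z\in\mathbb{R}^{n\times p_2}$ with rows $x_i,z_i$; $y\in\mathbb{R}^n$ ($y\in\{0,1\}^n$ for $\ell_{log}$); $a,b,c>0$; integers $1\le s_j\le p_j$. Losses $\ell_{lin}(\beta;X,y)=\frac12\sum_i(y_i-\langle x_i,\beta\rangle)^2$, $\ell_{log}(\beta;X,y)=\sum_i(\log(1+\exp\langle x_i,\beta\rangle)-y_i\langle x_i,\beta\rangle)$. Objective $f(\beta)=\frac1n[a\ell(\beta_1;X,y)+b\ell(\beta_2;Z,y)+\frac c2\|X\beta_1-Z\beta_2\|^2]$, $\beta=(\beta_1;\beta_2)$. (SCL): minimize $f$ subject to $\|\beta_1\|_0\le s_1,\|\beta_2\|_0\le s_2$; $\Sigma_j=\{v\in\mathbb{R}^{p_j}:\|v\|_0\le s_j\}$. Local minimizer: feasible point minimizing $f$ over feasible points in a neighborhood. $\Pi_{\Sigma_j}(w)=\arg\min_{u\in\Sigma_j}\|w-u\|$ (set-valued).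 $\beta^*$ is $\alpha$-stationary if $\beta_j^*\in\Pi_{\Sigma_j}(\beta_j^*-\alpha\nabla_jf(\beta^* ))$, $j=1,2$, where $\nabla_j f$ is the gradient in $\beta_j$. Constant $L_f$: for $\ell_{log}$, $L_f=\lambda_{\max}\big(\frac1n\begin{bmatrix}(a/4+c)X^\top X&-cX^\top Z\\-cZ^\top X&(b/4+c)Z^\top Z\end{bmatrix}\big)$; for $\ell_{lin}$, $L_f=\lambda_{\max}\big(\frac1n\begin{bmatrix}(a+c)X^\top X&-cX^\top Z\\-cZ^\top X&(b+c)Z^\top Z\end{bmatrix}\big)$. *)

(* Defs.v *)
From HB Require Import structures.
From mathcomp Require Import all_boot all_order all_algebra.
From mathcomp Require Import all_classical all_reals all_analysis.
Set Implicit Arguments. Unset Strict Implicit. Unset Printing Implicit Defensive.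
Import Order.TTheory GRing.Theory Num.Theory.
Import numFieldNormedType.Exports.
Local Open Scope ring_scope.

Section SCL.
Variable R : realType.

Inductive loss_kind := Llin | Llog.

Definition l0 p (v : 'cV[R]_p) : nat := #|[set i : 'I_p | v i 0 != 0]|.

Definition enorm p (v : 'cV[R]_p) : R := Num.sqrt (\sum_(i < p) v i 0 ^+ 2).

Definition Sigma p (s : nat) (v : 'cV[R]_p) : Prop := (l0 v <= s)%N.

Definition inProj p (s : nat) (w u : 'cV[R]_p) : Prop :=
  Sigma s u /\ forall v, Sigma s v -> enorm (w - u) <= enorm (w - v).

Definition ell n p (l : loss_kind) (b : 'cV[R]_p) (A : 'M[R]_(n, p)) (y : 'cV[R]_n) : R :=
  match l with
  | Llin => 2^-1 * \sum_(i < n) (y i 0 - (A *m b) i 0) ^+ 2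
  | Llog => \sum_(i < n) (ln (1 + expR ((A *m b) i 0)) - y i 0 * (A *m b) i 0)
  end.

Definition fobj n p1 p2 (l : loss_kind) (X : 'M[R]_(n, p1)) (Z : 'M[R]_(n, p2))
  (y : 'cV[R]_n) (a b c : R) (b1 : 'cV[R]_p1) (b2 : 'cV[R]_p2) : R :=
  (n%:R)^-1 * (a * ell l b1 X y + b * ell l b2 Z y
               + c / 2 * enorm (X *m b1 - Z *m b2) ^+ 2).

Definition grad p (F : 'cV[R]_p -> R) (x : 'cV[R]_p) : 'cV[R]_p :=
  \col_(k < p) derive1 (fun t : R => F (x + t *: delta_mx k 0)) 0.

Definition grad1 n p1 p2 l X Z y a b c (b1 : 'cV[R]_p1) (b2 : 'cV[R]_p2) : 'cV[R]_p1 :=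
  grad (fun u => @fobj n p1 p2 l X Z y a b c u b2) b1.
Definition grad2 n p1 p2 l X Z y a b c (b1 : 'cV[R]_p1) (b2 : 'cV[R]_p2) : 'cV[R]_p2 :=
  grad (fun u => @fobj n p1 p2 l X Z y a b c b1 u) b2.

Definition feasible p1 p2 s1 s2 (b1 : 'cV[R]_p1) (b2 : 'cV[R]_p2) : Prop :=
  Sigma s1 b1 /\ Sigma s2 b2.

Definition alpha_stationary n p1 p2 l X Z y a b c s1 s2 (alpha : R)
  (b1 : 'cV[R]_p1) (b2 : 'cV[R]_p2) : Prop :=
  inProj s1 (b1 - alpha *: @grad1 n p1 p2 l X Z y a b c b1 b2) b1 /\
  inProj s2 (b2 - alpha *: @grad2 n p1 p2 l X Z y a b c b1 b2) b2.

Definition local_min n p1 p2 l X Z y a b c s1 s2 (b1 : 'cV[R]_p1) (b2 : 'cV[R]_p2) : Prop :=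
  feasible s1 s2 b1 b2 /\
  exists eps : R, 0 < eps /\
    forall u1 u2, feasible s1 s2 u1 u2 ->
      Num.sqrt (enorm (u1 - b1) ^+ 2 + enorm (u2 - b2) ^+ 2) < eps ->
      @fobj n p1 p2 l X Z y a b c b1 b2 <= fobj l X Z y a b c u1 u2.

Definition global_min n p1 p2 l X Z y a b c s1 s2 (b1 : 'cV[R]_p1) (b2 : 'cV[R]_p2) : Prop :=
  feasible s1 s2 b1 b2 /\
  forall u1 u2, feasible s1 s2 u1 u2 ->
      @fobj n p1 p2 l X Z y a b c b1 b2 <= fobj l X Z y a b c u1 u2.

(* the matrix whose largest eigenvalue is L_f *)
Definition Lmat n p1 p2 l (X : 'M[R]_(n, p1)) (Z : 'M[R]_(n, p2)) (a b c : R)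
  : 'M[R]_(p1 + p2) :=
  let ka := match l with Llin => a | Llog => a / 4 end in
  let kb := match l with Llin => b | Llog => b / 4 end in
  (n%:R)^-1 *: block_mx ((ka + c) *: (X^T *m X)) (- c *: (X^T *m Z))
                        (- c *: (Z^T *m X)) ((kb + c) *: (Z^T *m Z)).

Definition is_lambda_max m (M : 'M[R]_m) (lam : R) : Prop :=
  eigenvalue M lam /\ forall mu, eigenvalue M mu -> mu <= lam.

End SCL.

(* Main.v *)
Require Import Defs.
From HB Require Import structures.
From mathcomp Require Import all_boot all_order all_algebra.
From mathcomp Require Import all_classical all_reals all_analysis.
From mathcomp Require Import ring lra.
Set Implicit Arguments. Unset Strict Implicit. Unset Printing Implicit Defensive.
Import Order.TTheory GRing.Theory Num.Theory.
Import numFieldNormedType.Exports.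
Local Open Scope ring_scope.

Section Scalar.
Variable R : realType.

Lemma der_F (F F' : R -> R) x : (forall t, is_derive t (1:R) F (F' t)) ->
  (F^`())%classic x = F' x.
Proof. by move=> dF; rewrite derive1E; case: (dF x) => _ ->. Qed.

Lemma cont_F (F F' : R -> R) : (forall t, is_derive t (1:R) F (F' t)) -> continuous F.
Proof.
move=> dF x; apply/differentiable_continuous/derivable1_diffP.
by case: (dF x).
Qed.

Lemma nonincr_deriv (F F' : R -> R) : (forall t, is_derive t (1:R) F (F' t)) ->
  (forall t, F' t <= 0) -> forall x y, x <= y -> F y <= F x.
Proof.
move=> dF Hn x y xy.
have der z : derivable F z 1 by case: (dF z).
apply: (@ler0_derive1_nincr _ F x y (fun z _ => der z) _
   (@continuous_subspaceT _ _ _ F (cont_F dF)) x y (lexx x) xy (lexx y)).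
by move=> z _; rewrite (der_F _ dF).
Qed.

Lemma sign_deriv_nonneg (F F' : R -> R) (s : R) :
  (forall t, is_derive t (1:R) F (F' t)) -> F s = 0 ->
  (forall t, s <= t -> 0 <= F' t) -> (forall t, t <= s -> F' t <= 0) ->
  forall t, 0 <= F t.
Proof.
move=> dF Fs0 Hp Hn t.
have der x : derivable F x 1 by case: (dF x).
have d1 x : (F^`())%classic x = F' x by exact: der_F.
have cF := cont_F dF.
case: (leP s t) => st.
- have H := @ger0_derive1_ndecr _ F s t (fun x _ => der x) _ (@continuous_subspaceT _ _ _ F cF) s t (lexx s) st (lexx t).
  rewrite -Fs0; apply: H => x; rewrite in_itv /= => /andP[sx _]; rewrite d1; apply: Hp; exact: ltW.
- have H := @ler0_derive1_nincr _ F t s (fun x _ => der x) _ (@continuous_subspaceT _ _ _ F cF) t s (lexx t) (ltW st) (lexx s).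
  rewrite -Fs0; apply: H => x; rewrite in_itv /= => /andP[_ xs]; rewrite d1; apply: Hn; exact: ltW.
Qed.

Definition sig (s : R) := 1 - (1 + expR s)^-1.

Definition Hf (l : loss_kind) (yi s : R) : R :=
  match l with Llin => 2^-1 * (yi - s)^+2 | Llog => ln (1 + expR s) - yi * s end.
Definition Hd (l : loss_kind) (yi s : R) : R :=
  match l with Llin => s - yi | Llog => sig s - yi end.
Definition kap (l : loss_kind) : R := match l with Llin => 1 | Llog => 4^-1 end.

Lemma onepe_gt0 (t : R) : 0 < 1 + expR t.
Proof. by rewrite addr_gt0 ?expR_gt0. Qed.

Lemma der_sp (t : R) : is_derive t (1:R) (fun t => ln (1 + expR t)) (sig t).
Proof.
have h1 : is_derive t (1:R) (fun t => 1 + expR t) (expR t).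
  by apply: is_derive_eq; rewrite add0r mul1r.
have h2 : is_derive (1 + expR t) (1:R) (@ln R) (1 + expR t)^-1.
  by apply: (@is_derive1_ln R); rewrite onepe_gt0.
have := @is_derive1_comp R (@ln R) (fun t => 1 + expR t) t _ _ h2 h1.
move=> h; apply: (is_derive_eq h).
have := onepe_gt0 t; rewrite /sig => e0.
field; exact: lt0r_neq0.
Qed.

Lemma der_sig (t : R) : is_derive t (1:R) sig (expR t / (1 + expR t)^+2).
Proof.
have h1 : is_derive t (1:R) (fun t => 1 + expR t) (expR t).
  by apply: is_derive_eq; rewrite add0r mul1r.
have h2 := @is_deriveV R (fun t => 1 + expR t) t (expR t) 1 (lt0r_neq0 (onepe_gt0 t)) h1.
rewrite /sig; apply: is_derive_eq.
rewrite /GRing.scale /=; field; exact: lt0r_neq0 (onepe_gt0 t).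
Qed.

Lemma Hf_der l yi t : is_derive t (1:R) (Hf l yi) (Hd l yi t).
Proof.
case: l => /=.
- change (is_derive t 1 (fun s => 2^-1 * (yi - s)^+2) (t - yi)).
  by apply: is_derive_eq; rewrite /GRing.scale /=; field.
- change (is_derive t 1 (fun s => ln (1 + expR s) - yi * s) (sig t - yi)).
  have := der_sp t => hsp.
  by apply: is_derive_eq; rewrite /GRing.scale /= mulr1.
Qed.

Lemma sig_mono s t : s <= t -> sig s <= sig t.
Proof.
move=> st; rewrite /sig lerD2l lerN2 lef_pV2 ?posrE ?onepe_gt0 //.
by rewrite lerD2l ler_expR.
Qed.

Lemma chi_nonincr s t : s <= t -> sig t - t / 4 <= sig s - s / 4.
Proof.
apply: (@nonincr_deriv (fun x => sig x - x / 4) (fun x => expR x / (1 + expR x)^+2 - 4^-1)).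
- move=> x; have := der_sig x => hs.
  apply: is_derive_eq; rewrite /GRing.scale /=.
  have := onepe_gt0 x => p0; field; exact: lt0r_neq0.
- move=> x; rewrite subr_le0.
  have e0 := expR_gt0 x; have p0 := onepe_gt0 x.
  rewrite -subr_ge0.
  have -> : 4^-1 - expR x / (1 + expR x) ^+ 2 = (1 - expR x)^+2 / (4 * (1 + expR x)^+2).
    by field; rewrite lt0r_neq0.
  by apply: divr_ge0; [exact: sqr_ge0| rewrite mulr_ge0 // sqr_ge0].
Qed.

Lemma Hf_cvx l yi s s' : Hf l yi s + Hd l yi s * (s' - s) <= Hf l yi s'.
Proof.
case: l.
- rewrite -subr_ge0 /=.
  have -> : 2^-1 * (yi - s') ^+ 2 - (2^-1 * (yi - s) ^+ 2 + (s - yi) * (s' - s))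
     = 2^-1 * (s' - s)^+2 by field.
  by rewrite mulr_ge0 ?sqr_ge0 // invr_ge0.
- rewrite -subr_ge0.
  pose F t := Hf Llog yi t - (Hf Llog yi s + Hd Llog yi s * (t - s)).
  pose F' t := Hd Llog yi t - Hd Llog yi s.
  apply: (@sign_deriv_nonneg F F' s) => [t||t st|t ts].
  + have := Hf_der Llog yi t => hd.
    by rewrite /F /F'; apply: is_derive_eq; rewrite /GRing.scale /=; field.
  + by rewrite /F subrr mulr0 addr0 subrr.
  + by rewrite /F' /= subr_ge0 lerD2r sig_mono.
  + by rewrite /F' /= subr_le0 lerD2r sig_mono.
Qed.

Lemma Hf_smooth l yi s s' :
  Hf l yi s' <= Hf l yi s + Hd l yi s * (s' - s) + kap l / 2 * (s' - s)^+2.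
Proof.
case: l.
- rewrite /= -subr_ge0.
  have -> : 2^-1 * (yi - s) ^+ 2 + (s - yi) * (s' - s) + 1 / 2 * (s' - s) ^+ 2 -
    2^-1 * (yi - s') ^+ 2 = 0 by field.
  exact: lexx.
- rewrite -subr_ge0.
  pose F t := Hf Llog yi s + Hd Llog yi s * (t - s) + kap Llog / 2 * (t - s) ^+ 2 - Hf Llog yi t.
  pose F' t := Hd Llog yi s + 4^-1 * (t - s) - Hd Llog yi t.
  apply: (@sign_deriv_nonneg F F' s) => [t||t st|t ts].
  + have := Hf_der Llog yi t => hd.
    by rewrite /F /F'; apply: is_derive_eq; rewrite /GRing.scale /=; field.
  + by rewrite /F subrr mulr0 addr0 expr0n /= mulr0 addr0 subrr.
  + have := chi_nonincr st; rewrite /F' /=; lra.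
  + have := chi_nonincr ts; rewrite /F' /=; lra.
Qed.


Lemma Hf_lin_der l yi s x : is_derive (0:R) (1:R) (fun t => Hf l yi (s + t * x)) (Hd l yi s * x).
Proof.
have h1 : is_derive (0:R) (1:R) (fun t => s + t * x) x.
  by apply: is_derive_eq; rewrite /GRing.scale /= ?mul0r ?add0r ?addr0 ?mul1r ?mulr1 ?subr0; field.
have h2 := Hf_der l yi (s + 0 * x).
have := @is_derive1_comp R (Hf l yi) (fun t => s + t * x) 0 _ _ h2 h1.
by rewrite mul0r addr0.
Qed.

Lemma sum_der m (F : 'I_m -> R -> R) dF (x : R) :
  (forall i, is_derive x (1:R) (F i) (dF i)) ->
  is_derive x (1:R) (fun t => \sum_i F i t) (\sum_i dF i).
Proof. by move=> H; have := is_derive_sum H; rewrite fct_sumE. Qed.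

End Scalar.

Section Main.
Variables (R : realType) (n p1 p2 : nat) (l : loss_kind)
  (X : 'M[R]_(n, p1)) (Z : 'M[R]_(n, p2)) (y : 'cV[R]_n) (a b c : R).

Local Notation f := (fobj l X Z y a b c).

Lemma enorm_sq p (v : 'cV[R]_p) : enorm v ^+ 2 = \sum_i v i 0 ^+ 2.
Proof. by rewrite /enorm sqr_sqrtr // sumr_ge0 // => i _; rewrite sqr_ge0. Qed.

Lemma ell_E p (A : 'M[R]_(n, p)) v : ell l v A y = \sum_i Hf l (y i 0) ((A *m v) i 0).
Proof. by case: l => //=; rewrite mulr_sumr. Qed.

Lemma fE u1 u2 : f u1 u2 = n%:R^-1 * \sum_i (a * Hf l (y i 0) ((X *m u1) i 0)
   + b * Hf l (y i 0) ((Z *m u2) i 0) + c / 2 * ((X *m u1) i 0 - (Z *m u2) i 0) ^+ 2).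
Proof.
rewrite /fobj !ell_E enorm_sq !big_split /= -!mulr_sumr; congr (_ * (_ + _ * _)).
by apply: eq_bigr => i _; rewrite !mxE.
Qed.

Definition g1v (u1 : 'cV[R]_p1) (u2 : 'cV[R]_p2) : 'cV[R]_p1 := \col_k (n%:R^-1 * \sum_i (a * Hd l (y i 0) ((X *m u1) i 0)
   + c * ((X *m u1) i 0 - (Z *m u2) i 0)) * X i k).
Definition g2v (u1 : 'cV[R]_p1) (u2 : 'cV[R]_p2) : 'cV[R]_p2 := \col_k (n%:R^-1 * \sum_i (b * Hd l (y i 0) ((Z *m u2) i 0)
   - c * ((X *m u1) i 0 - (Z *m u2) i 0)) * Z i k).

Lemma mul_delta p (A : 'M[R]_(n, p)) (v : 'cV[R]_p) (k : 'I_p) (t : R) (i : 'I_n) :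
  (A *m (v + t *: delta_mx k 0)) i 0 = (A *m v) i 0 + t * A i k.
Proof.
rewrite mulmxDr -scalemxAr [LHS]mxE [X in _ + X]mxE; congr (_ + _ * _).
rewrite mxE (bigD1 k) //= big1 ?addr0; first by rewrite mxE !eqxx mulr1.
by move=> j /negbTE nj; rewrite mxE nj mulr0.
Qed.

Lemma grad1E u1 u2 : grad1 l X Z y a b c u1 u2 = g1v u1 u2.
Proof.
apply/matrixP => k j; rewrite (ord1 j) /grad1 /grad !mxE.
have -> : (fun t => f (u1 + t *: delta_mx k 0) u2) = (fun t => n%:R^-1 * \sum_i
   (a * Hf l (y i 0) ((X *m u1) i 0 + t * X i k) + b * Hf l (y i 0) ((Z *m u2) i 0)
    + c / 2 * ((X *m u1) i 0 + t * X i k - (Z *m u2) i 0) ^+ 2)).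
  by apply/funext => t; rewrite fE; congr (_ * _); apply: eq_bigr => i _; rewrite mul_delta.
have hs : is_derive (0:R) (1:R) (fun t => \sum_i
   (a * Hf l (y i 0) ((X *m u1) i 0 + t * X i k) + b * Hf l (y i 0) ((Z *m u2) i 0)
    + c / 2 * ((X *m u1) i 0 + t * X i k - (Z *m u2) i 0) ^+ 2))
   (\sum_i (a * Hd l (y i 0) ((X *m u1) i 0) + c * ((X *m u1) i 0 - (Z *m u2) i 0)) * X i k).
  apply: sum_der => i.
  have hl := Hf_lin_der l (y i 0) ((X *m u1) i 0) (X i k).
  by apply: is_derive_eq; rewrite /GRing.scale /= ?mul0r ?add0r ?addr0 ?mul1r ?mulr1 ?subr0; field.
have := is_deriveZ (n%:R^-1) hs.
by rewrite derive1E => -[_ ->].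
Qed.

Lemma grad2E u1 u2 : grad2 l X Z y a b c u1 u2 = g2v u1 u2.
Proof.
apply/matrixP => k j; rewrite (ord1 j) /grad2 /grad !mxE.
have -> : (fun t => f u1 (u2 + t *: delta_mx k 0)) = (fun t => n%:R^-1 * \sum_i
   (a * Hf l (y i 0) ((X *m u1) i 0) + b * Hf l (y i 0) ((Z *m u2) i 0 + t * Z i k)
    + c / 2 * ((X *m u1) i 0 - ((Z *m u2) i 0 + t * Z i k)) ^+ 2)).
  by apply/funext => t; rewrite fE; congr (_ * _); apply: eq_bigr => i _; rewrite mul_delta.
have hs : is_derive (0:R) (1:R) (fun t => \sum_i
   (a * Hf l (y i 0) ((X *m u1) i 0) + b * Hf l (y i 0) ((Z *m u2) i 0 + t * Z i k)
    + c / 2 * ((X *m u1) i 0 - ((Z *m u2) i 0 + t * Z i k)) ^+ 2))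
   (\sum_i (b * Hd l (y i 0) ((Z *m u2) i 0) - c * ((X *m u1) i 0 - (Z *m u2) i 0)) * Z i k).
  apply: sum_der => i.
  have hl := Hf_lin_der l (y i 0) ((Z *m u2) i 0) (Z i k).
  by apply: is_derive_eq; rewrite /GRing.scale /= ?mul0r ?add0r ?addr0 ?mul1r ?mulr1 ?subr0; field.
have := is_deriveZ (n%:R^-1) hs.
by rewrite derive1E => -[_ ->].
Qed.


Definition dotc p (g d : 'cV[R]_p) : R := \sum_k g k 0 * d k 0.

Lemma sum_swap p (A : 'I_n -> R) (M : 'M[R]_(n, p)) (d : 'cV[R]_p) :
  \sum_k (n%:R^-1 * \sum_i A i * M i k) * d k 0 = n%:R^-1 * \sum_i A i * (M *m d) i 0.
Proof.
under eq_bigr do rewrite big_distrr /= big_distrl /=.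
rewrite exchange_big /= mulr_sumr; apply: eq_bigr => i _.
rewrite mxE big_distrr /= big_distrr /=; apply: eq_bigr => k _; ring.
Qed.

Lemma dot1 u1 u2 (d : 'cV[R]_p1) : dotc (g1v u1 u2) d = n%:R^-1 * \sum_i
   (a * Hd l (y i 0) ((X *m u1) i 0) + c * ((X *m u1) i 0 - (Z *m u2) i 0)) * (X *m d) i 0.
Proof. by rewrite /dotc; under eq_bigr do rewrite mxE; exact: sum_swap. Qed.

Lemma dot2 u1 u2 (d : 'cV[R]_p2) : dotc (g2v u1 u2) d = n%:R^-1 * \sum_i
   (b * Hd l (y i 0) ((Z *m u2) i 0) - c * ((X *m u1) i 0 - (Z *m u2) i 0)) * (Z *m d) i 0.
Proof. by rewrite /dotc; under eq_bigr do rewrite mxE; exact: sum_swap. Qed.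

Lemma mulB_entry p (A : 'M[R]_(n, p)) (u v : 'cV[R]_p) i :
  (A *m (u - v)) i 0 = (A *m u) i 0 - (A *m v) i 0.
Proof. by rewrite mulmxBr [LHS]mxE [X in _ + X]mxE. Qed.

Hypotheses (ha : 0 < a) (hb : 0 < b) (hc : 0 < c).

Lemma ninv_ge0 : 0 <= n%:R^-1 :> R.
Proof. by rewrite invr_ge0 ler0n. Qed.

Lemma cvx_ineq b1 b2 u1 u2 :
  f b1 b2 + dotc (g1v b1 b2) (u1 - b1) + dotc (g2v b1 b2) (u2 - b2) <= f u1 u2.
Proof.
rewrite dot1 dot2 !fE -!mulrDr; apply: ler_wpM2l; first exact: ninv_ge0.
rewrite -!big_split; apply: ler_sum => i _; rewrite !mulB_entry /=.
set s := (X *m b1) i 0; set s' := (X *m u1) i 0.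
set z := (Z *m b2) i 0; set z' := (Z *m u2) i 0.
have h1 := Hf_cvx l (y i 0) s s'.
have h2 := Hf_cvx l (y i 0) z z'.
have e1 := ler_wpM2l (ltW ha) h1.
have e2 := ler_wpM2l (ltW hb) h2.
have e3 : 0 <= c / 2 * ((s' - z') - (s - z)) ^+ 2 by rewrite mulr_ge0 ?sqr_ge0 // divr_ge0 // ltW.
move: e1 e2 e3; move: (Hf _ _ s) (Hf _ _ s') (Hf _ _ z) (Hf _ _ z') (Hd _ _ s) (Hd _ _ z) => A B C D E F.
move=> e1 e2 e3; nra.
Qed.

Lemma smooth1 b1 b2 u1 :
  f u1 b2 <= f b1 b2 + dotc (g1v b1 b2) (u1 - b1)
     + n%:R^-1 * ((a * kap R l + c) / 2 * \sum_i ((X *m (u1 - b1)) i 0) ^+ 2).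
Proof.
rewrite dot1 !fE mulr_sumr -!mulrDr; apply: ler_wpM2l; first exact: ninv_ge0.
rewrite -!big_split; apply: ler_sum => i _; rewrite !mulB_entry /=.
set s := (X *m b1) i 0; set s' := (X *m u1) i 0.
set z := (Z *m b2) i 0.
have h1 := Hf_smooth l (y i 0) s s'.
have e1 := ler_wpM2l (ltW ha) h1.
move: e1; move: (Hf _ _ s) (Hf _ _ s') (Hf _ _ z) (Hd _ _ s) => A B C E.
move=> e1; nra.
Qed.

Lemma smooth2 b1 b2 u2 :
  f b1 u2 <= f b1 b2 + dotc (g2v b1 b2) (u2 - b2)
     + n%:R^-1 * ((b * kap R l + c) / 2 * \sum_i ((Z *m (u2 - b2)) i 0) ^+ 2).
Proof.
rewrite dot2 !fE mulr_sumr -!mulrDr; apply: ler_wpM2l; first exact: ninv_ge0.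
rewrite -!big_split; apply: ler_sum => i _; rewrite !mulB_entry /=.
set s := (X *m b1) i 0.
set z := (Z *m b2) i 0; set z' := (Z *m u2) i 0.
have h1 := Hf_smooth l (y i 0) z z'.
have e1 := ler_wpM2l (ltW hb) h1.
move: e1; move: (Hf _ _ s) (Hf _ _ z) (Hf _ _ z') (Hd _ _ z) => A B C E.
move=> e1; nra.
Qed.

End Main.

Section Spec.
Variable R : realType.
Local Open Scope classical_set_scope.

Definition bil m (u : 'rV[R]_m) (N : 'M[R]_m) (v : 'rV[R]_m) : R := (u *m N *m v^T) 0 0.
Definition nr m (u : 'rV[R]_m) : R := (u *m u^T) 0 0.

Lemma nrE m (u : 'rV[R]_m) : nr u = \sum_j u 0 j ^+ 2.
Proof. by rewrite /nr mxE; apply: eq_bigr => j _; rewrite mxE expr2. Qed.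

Lemma bilE m (u : 'rV[R]_m) N v : bil u N v = \sum_j (\sum_i u 0 i * N i j) * v 0 j.
Proof.
rewrite /bil mxE; apply: eq_bigr => j _; rewrite !mxE; congr (_ * _).
Qed.

Lemma nr_ge0 m (u : 'rV[R]_m) : 0 <= nr u.
Proof. by rewrite nrE sumr_ge0 // => j _; rewrite sqr_ge0. Qed.

Lemma nr_eq0 m (u : 'rV[R]_m) : nr u = 0 -> u = 0.
Proof.
rewrite nrE => /eqP; rewrite psumr_eq0 => [/allP H|j _]; last exact: sqr_ge0.
apply/rowP => j; rewrite mxE.
have := H j (mem_index_enum j); rewrite /= sqrf_eq0 => /eqP ->; by [].
Qed.

Lemma bil_cont m (N : 'M[R]_m) : continuous (fun w : 'rV[R]_m => bil w N w).
Proof.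
have -> : (fun w : 'rV[R]_m => bil w N w) =
   (fun w => \sum_(j <- index_enum 'I_m | true) (\sum_(i <- index_enum 'I_m | true) w 0 i * N i j) * w 0 j).
  by apply/funext => w; rewrite bilE.
apply: continuous_big => [|j _]; first exact: add_continuous.
move=> w; apply: continuousM; last exact: coord_continuous.
apply: continuous_big => [|i _]; first exact: add_continuous.
move=> w'; apply: continuousM; first exact: coord_continuous.
exact: cst_continuous.
Qed.


Definition dt m (u v : 'rV[R]_m) : R := (u *m v^T) 0 0.

Lemma dtC m (u v : 'rV[R]_m) : dt u v = dt v u.
Proof. by rewrite /dt -[u *m v^T]trmxK trmx_mul trmxK mxE. Qed.
Lemma dtDl m (u u' v : 'rV[R]_m) : dt (u + u') v = dt u v + dt u' v.
Proof. by rewrite /dt mulmxDl mxE. Qed.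
Lemma dtZl m t (u v : 'rV[R]_m) : dt (t *: u) v = t * dt u v.
Proof. by rewrite /dt -scalemxAl mxE. Qed.
Lemma dtBl m (u u' v : 'rV[R]_m) : dt (u - u') v = dt u v - dt u' v.
Proof. by rewrite /dt mulmxBl [LHS]mxE [X in _ + X]mxE. Qed.
Lemma dtDr m (u v v' : 'rV[R]_m) : dt u (v + v') = dt u v + dt u v'.
Proof. by rewrite dtC dtDl dtC [dt v' _]dtC. Qed.
Lemma dtZr m t (u v : 'rV[R]_m) : dt u (t *: v) = t * dt u v.
Proof. by rewrite dtC dtZl dtC. Qed.
Lemma nr_dt m (u : 'rV[R]_m) : nr u = dt u u. Proof. by []. Qed.
Lemma bil_dt m (u v : 'rV[R]_m) N : bil u N v = dt (u *m N) v. Proof. by []. Qed.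
Lemma dt_sym m (u v : 'rV[R]_m) N : N^T = N -> dt (u *m N) v = dt (v *m N) u.
Proof.
move=> sN; rewrite [RHS]dtC /dt trmx_mul sN mulmxA //.
Qed.

Lemma le_sum1 m (F : 'I_m -> R) j : (forall i, 0 <= F i) -> F j <= \sum_i F i.
Proof. by move=> H; rewrite (bigD1 j) //= lerDl sumr_ge0. Qed.

Lemma quad_nonneg (A C : R) : 0 <= A -> (forall t, 0 <= 2 * t * A + t ^+ 2 * C) -> A = 0.
Proof.
move=> A0 H; set k := `|C| + 1.
have k0 : 0 < k by rewrite /k ltr_wpDl.
have Ck : C <= k by rewrite /k (le_trans (ler_norm C)) // lerDl.
have := H (- A / k).
have -> : 2 * (- A / k) * A + (- A / k) ^+ 2 * C = - (A^+2 / k) + (A / k)^+2 * (C - k).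
  by field; rewrite lt0r_neq0.
move=> h.
have h2 : (A / k) ^+ 2 * (C - k) <= 0 by rewrite mulr_ge0_le0 ?sqr_ge0 // subr_le0.
have h3 : A ^+ 2 / k <= 0 by lra.
have h4 : 0 <= A ^+ 2 / k by rewrite divr_ge0 ?sqr_ge0 // ltW.
have : A ^+ 2 / k == 0 by rewrite eq_le h3 h4.
rewrite mulf_eq0 invr_eq0 (gt_eqF k0) orbF sqrf_eq0 => /eqP //.
Qed.

Lemma psd_of_eig m (N : 'M[R]_m) : N^T = N ->
  (forall mu, eigenvalue N mu -> 0 <= mu) -> forall v, 0 <= bil v N v.
Proof.
case: m N => [|m] N sN hev v.
  by rewrite bilE big_ord0.
pose S := [set w : 'rV[R]_m.+1 | nr w = 1].
have S0 : S !=set0.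
  exists (delta_mx 0 0); rewrite /S /= nrE (bigD1 0) //= big1 ?mxE ?eqxx ?addr0 ?expr1n //.
  by move=> j /negbTE nj; rewrite mxE nj andbF expr0n.
have nr_cont : continuous (fun w : 'rV[R]_m.+1 => nr w).
  have -> : (fun w : 'rV[R]_m.+1 => nr w) = (fun w => bil w 1%:M w).
    by apply/funext => w; rewrite /bil /nr mulmx1.
  exact: bil_cont.
have Sc : compact S.
  apply: (@subclosed_compact _ _ [set v : 'rV[R]_m.+1 | forall i, `[-1, 1]%classic (v ord0 i)]).
  - have -> : S = (fun w : 'rV[R]_m.+1 => nr w) @^-1` [set x | x = 1] by [].
    apply: preimage_closed; last exact: closed_eq.
    by move=> x _; exact: nr_cont.
  - exact: (@rV_compact R _ (fun _ => `[-1, 1]%classic) (fun _ => @segment_compact R (-1) 1)).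
  - move=> w; rewrite /S /= => w1 i; rewrite /= in_itv /=.
    have : w ord0 i ^+ 2 <= 1.
      by rewrite -w1 nrE (@le_sum1 _ (fun j => w 0 j ^+ 2)) // => j; exact: sqr_ge0.
    move=> h; apply/andP; split; nra.
have [w0 Sw0 minw] := compact_EVT_min S0 Sc (@continuous_subspaceT _ _ _ (fun w => bil w N w) (@bil_cont _ N)).
move: Sw0; rewrite inE /S /= => nw0.
set lam := bil w0 N w0.
have key1 w : lam * nr w <= bil w N w.
  have [/nr_eq0 ->|nz] := eqVneq (nr w) 0.
    by rewrite bil_dt nr_dt mul0mx /dt mul0mx mxE mulr0.
  have pos : 0 < nr w by rewrite lt0r nz nr_ge0.
  set k := Num.sqrt (nr w).
  have k0 : 0 < k by rewrite sqrtr_gt0.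
  have kk : k ^+ 2 = nr w by rewrite sqr_sqrtr // ltW.
  have : (k^-1 *: w) \in S.
    by rewrite inE /S /= nr_dt dtZl dtZr -nr_dt -kk; field; rewrite lt0r_neq0.
  move=> /minw; rewrite /lam !bil_dt -scalemxAl dtZl dtZr -bil_dt => h.
  have : lam * k ^+ 2 <= (k^-1 * (k^-1 * bil w N w)) * k ^+ 2.
    by rewrite ler_pM2r ?exprn_gt0.
  by rewrite kk; have -> : k^-1 * (k^-1 * bil w N w) * nr w = bil w N w by rewrite -kk; field; rewrite lt0r_neq0.
have [r rdef] : {r | r = w0 *m N - lam *: w0} by eexists.
have e3 : dt r r = dt (w0 *m N) r - lam * dt w0 r by rewrite {1}rdef dtBl dtZl.
have key2 t : 0 <= 2 * t * nr r + t ^+ 2 * (bil r N r - lam * nr r).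
  have h := key1 (w0 + t *: r).
  rewrite !bil_dt !nr_dt mulmxDl -scalemxAl !dtDl !dtDr !dtZl !dtZr in h.
  have e1 : dt (r *m N) w0 = dt (w0 *m N) r by apply: dt_sym.
  have e2 : dt r w0 = dt w0 r by apply: dtC.
  have e4 : dt w0 w0 = 1 by [].
  have e5 : dt (w0 *m N) w0 = lam by [].
  rewrite e1 e2 e4 e5 in h.
  have eB : dt (w0 *m N) r = dt r r + lam * dt w0 r by rewrite e3; ring.
  rewrite eB in h; rewrite nr_dt bil_dt; lra.
have r0 : r = 0 by apply: nr_eq0; apply: (quad_nonneg (nr_ge0 r) key2).
have : eigenvalue N lam.
  apply/eigenvalueP; exists w0.
    by apply/eqP; rewrite -subr_eq0 -rdef r0.
  by apply/eqP => w00; move: nw0; rewrite w00 /nr mul0mx mxE => /esym/eqP; rewrite oner_eq0.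
move/hev => lam0.
by apply: le_trans (key1 v); rewrite mulr_ge0 // nr_ge0.
Qed.

End Spec.

Section Final.
Variable R : realType.

Lemma lmax_bound m (M : 'M[R]_m) L : M^T = M -> is_lambda_max M L ->
  forall v, bil v M v <= L * nr v.
Proof.
move=> sM [_ hmax] v.
set N := L%:M - M.
have sN : N^T = N by rewrite /N linearB /= tr_scalar_mx sM.
have hev : forall mu, eigenvalue N mu -> 0 <= mu.
  move=> mu /eigenvalueP [w wN wn0].
  have : eigenvalue M (L - mu).
    apply/eigenvalueP; exists w => //.
    by rewrite scalerBl -wN /N mulmxBr mul_mx_scalar opprB addrCA subrr addr0.
  by move/hmax; rewrite lerBlDr lerDl.
have := psd_of_eig sN hev v.
by rewrite !bil_dt /N mulmxBr mul_mx_scalar dtBl dtZl -bil_dt -nr_dt subr_ge0.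
Qed.

End Final.

Section LmatS.
Variables (R : realType) (n p1 p2 : nat) (l : loss_kind)
  (X : 'M[R]_(n, p1)) (Z : 'M[R]_(n, p2)) (a b c : R).

Lemma Lmat_sym : (Lmat l X Z a b c)^T = Lmat l X Z a b c.
Proof.
by rewrite /Lmat linearZ /= tr_block_mx !linearZ /= !trmx_mul !trmxK.
Qed.

Lemma quadform p q (d : 'cV[R]_p) (A : 'M[R]_(q, p)) :
  (d^T *m (A^T *m A) *m d) 0 0 = \sum_i ((A *m d) i 0) ^+ 2.
Proof.
rewrite mulmxA -trmx_mul -mulmxA mxE; apply: eq_bigr => i _.
by rewrite mxE expr2.
Qed.

Lemma quad1 (d : 'cV[R]_p1) :
  bil (col_mx d (0 : 'cV[R]_p2))^T (Lmat l X Z a b c) (col_mx d (0 : 'cV[R]_p2))^T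
  = n%:R^-1 * (a * kap R l + c) * \sum_i ((X *m d) i 0) ^+ 2.
Proof.
rewrite /bil trmxK /Lmat tr_col_mx trmx0 -scalemxAr -scalemxAl mxE.
rewrite mul_row_block mul_row_col !mul0mx !addr0 mulmx0 addr0.
rewrite -scalemxAr -scalemxAl mxE quadform mulrA.
by case: l => /=; rewrite ?mulr1.
Qed.

Lemma quad2 (d : 'cV[R]_p2) :
  bil (col_mx (0 : 'cV[R]_p1) d)^T (Lmat l X Z a b c) (col_mx (0 : 'cV[R]_p1) d)^T
  = n%:R^-1 * (b * kap R l + c) * \sum_i ((Z *m d) i 0) ^+ 2.
Proof.
rewrite /bil trmxK /Lmat tr_col_mx trmx0 -scalemxAr -scalemxAl mxE.
rewrite mul_row_block mul_row_col !mul0mx !add0r mulmx0 add0r.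
rewrite -scalemxAr -scalemxAl mxE quadform mulrA.
by case: l => /=; rewrite ?mulr1.
Qed.

Lemma nr_col1 (d : 'cV[R]_p1) : nr (col_mx d (0 : 'cV[R]_p2))^T = \sum_k d k 0 ^+ 2.
Proof.
rewrite nrE big_split_ord /= [X in _ + X]big1 ?addr0.
  by apply: eq_bigr => k _; rewrite mxE col_mxEu.
by move=> k _; rewrite mxE col_mxEd mxE expr0n.
Qed.

Lemma nr_col2 (d : 'cV[R]_p2) : nr (col_mx (0 : 'cV[R]_p1) d)^T = \sum_k d k 0 ^+ 2.
Proof.
rewrite nrE big_split_ord /= big1 ?add0r.
  by apply: eq_bigr => k _; rewrite mxE col_mxEd.
by move=> k _; rewrite mxE col_mxEu mxE expr0n.
Qed.

End LmatS.

Section Proj.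
Variable R : realType.

Definition supp p (v : 'cV[R]_p) := [set k | v k 0 != 0].

Lemma enorm_ltP p (u v : 'cV[R]_p) :
  \sum_k u k 0 ^+ 2 < \sum_k v k 0 ^+ 2 -> enorm u < enorm v.
Proof.
move=> h; rewrite /enorm ltr_sqrt //.
apply: le_lt_trans h; rewrite sumr_ge0 // => k _; exact: sqr_ge0.
Qed.

Lemma stat_zero p s (bv g : 'cV[R]_p) (alpha : R) : 0 < alpha ->
  inProj s (bv - alpha *: g) bv ->
  forall i, ((i \notin supp bv) + l0 bv <= s)%N -> g i 0 = 0.
Proof.
move=> a0 [_ H] i hi; apply/eqP; apply: contraT => gi.
set u := bv - (alpha * g i 0) *: delta_mx i 0.
have su : Sigma s u.
  rewrite /Sigma; apply: leq_trans hi.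
  have -> : l0 bv = #|supp bv| by [].
  rewrite -cardsU1; apply: subset_leq_card; apply/fintype.subsetP => k.
  rewrite !inE /u !mxE.
  have [->|nki] := eqVneq k i; first by rewrite eqxx.
  by rewrite /= mulr0 subr0 => ->.
suff hlt : enorm (bv - alpha *: g - u) < enorm (bv - alpha *: g - bv).
  by move: (H u su); rewrite leNgt hlt.
apply: enorm_ltP.
rewrite (bigD1 i) //= [X in _ < X](bigD1 i) //=.
have e1 : forall k, k != i -> (bv - alpha *: g - u) k 0 = (bv - alpha *: g - bv) k 0.
  by move=> k nki; rewrite /u !mxE (negbTE nki) /= mulr0 subr0.
rewrite (eq_bigr (fun k => (bv - alpha *: g - bv) k 0 ^+ 2)); last first.
  by move=> k nki; rewrite e1.
rewrite ltrD2r /u !mxE !eqxx /= mulr1.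
have -> : bv i 0 - alpha * g i 0 - (bv i 0 - alpha * g i 0) = 0 by ring.
have -> : bv i 0 - alpha * g i 0 - bv i 0 = - (alpha * g i 0) by ring.
by rewrite expr0n /= sqrrN lt_def sqr_ge0 andbT sqrf_eq0 mulf_neq0 // lt0r_neq0.
Qed.

End Proj.

Section Proj2.
Variable R : realType.

Lemma dot_zero p s (bv g u : 'cV[R]_p) :
  (forall i, ((i \notin supp bv) + l0 bv <= s)%N -> g i 0 = 0) ->
  Sigma s bv -> Sigma s u -> (forall k, bv k 0 != 0 -> u k 0 != 0) ->
  dotc g (u - bv) = 0.
Proof.
move=> hg sb su hsub; apply: big1 => k _.
have [gk0|gk] := eqVneq (g k 0) 0; first by rewrite gk0 mul0r.
have bk : bv k 0 = 0.
  case: (eqVneq (bv k 0) 0) => // bk; move: gk; rewrite hg ?eqxx //.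
  by rewrite /supp inE bk.
have uk : u k 0 = 0.
  case: (eqVneq (u k 0) 0) => // uk; move: gk; rewrite hg ?eqxx //.
  have nk : k \notin supp bv by rewrite /supp inE bk eqxx.
  rewrite nk; apply: leq_trans su.
  have -> : (true + l0 bv)%N = #|k |: supp bv| by rewrite cardsU1 nk.
  apply: subset_leq_card; apply/fintype.subsetP => j; rewrite !inE.
  by case/orP => [/eqP ->|]; [exact: uk| exact: hsub].
by rewrite !mxE bk uk subrr mulr0.
Qed.

Definition Sinv p (v : 'cV[R]_p) : R :=
  \sum_k (if v k 0 == 0 then 0 else `|v k 0|^-1).

Lemma Sinv_ge0 p (v : 'cV[R]_p) : 0 <= Sinv v.
Proof.
by apply: sumr_ge0 => k _; case: eqP => // _; rewrite invr_ge0.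
Qed.

Lemma Sinv_le p (v : 'cV[R]_p) k : v k 0 != 0 -> `|v k 0|^-1 <= Sinv v.
Proof.
move=> h; rewrite /Sinv (bigD1 k) //= (negbTE h) lerDl.
by apply: sumr_ge0 => j _; case: eqP => // _; rewrite invr_ge0.
Qed.

Lemma eps_le (T : R) p (v : 'cV[R]_p) k : 0 <= T -> v k 0 != 0 ->
  (Sinv v + T + 1)^-1 <= `|v k 0|.
Proof.
move=> T0 h.
have p0 : 0 < `|v k 0| by rewrite normr_gt0.
have S0 : 0 < Sinv v + T + 1 by have := Sinv_ge0 v; lra.
rewrite -[X in _ <= X]invrK lef_pV2 ?posrE ?invr_gt0 //.
have := Sinv_le h; lra.
Qed.

Lemma coord_le p (d : 'cV[R]_p) k T : 0 <= T ->
  `|d k 0| <= Num.sqrt (enorm d ^+ 2 + T).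
Proof.
move=> T0; rewrite -sqrtr_sqr; apply: ler_wsqrtr; rewrite enorm_sq.
have h := @le_sum1 R p (fun j => d j 0 ^+ 2) k (fun j => sqr_ge0 _).
move: h; rewrite /=; lra.
Qed.

End Proj2.

Lemma sq_expand (R : realType) p (g d : 'cV[R]_p) (al : R) :
  \sum_k (d k 0 + al * g k 0) ^+ 2
  = \sum_k d k 0 ^+ 2 + 2 * al * dotc g d + al ^+ 2 * \sum_k g k 0 ^+ 2.
Proof.
rewrite /dotc !mulr_sumr -!big_split /=; apply: eq_bigr => k _; ring.
Qed.

Lemma sq_expand0 (R : realType) p (g : 'cV[R]_p) (al : R) :
  \sum_k (al * g k 0) ^+ 2 = al ^+ 2 * \sum_k g k 0 ^+ 2.
Proof. by rewrite mulr_sumr; apply: eq_bigr => k _; rewrite exprMn. Qed.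

Lemma proj_step (R : realType) p s (bv g : 'cV[R]_p) (alpha Lf : R) (F : 'cV[R]_p -> R)
  (Q : 'cV[R]_p -> R) :
  0 < alpha -> alpha * Lf < 1 -> Sigma s bv ->
  (forall v, Sigma s v -> F bv <= F v) ->
  (forall v, F v <= F bv + dotc g (v - bv) + Q (v - bv)) ->
  (forall d, 2 * Q d <= Lf * \sum_k d k 0 ^+ 2) ->
  inProj s (bv - alpha *: g) bv.
Proof.
move=> a0 aL sb Hmin Hsm HQ; split => // v sv.
case: (leP (enorm (bv - alpha *: g - bv)) (enorm (bv - alpha *: g - v))) => // hlt.
exfalso.
have hsq : \sum_k (bv - alpha *: g - v) k 0 ^+ 2 < \sum_k (bv - alpha *: g - bv) k 0 ^+ 2.
  rewrite -!enorm_sq; have := @sqrtr_ge0 _ (\sum_k (bv - alpha *: g - v) k 0 ^+ 2).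
  rewrite -/(enorm _) => h0; nra.
have e1 : \sum_k (bv - alpha *: g - v) k 0 ^+ 2 = \sum_k ((v - bv) k 0 + alpha * g k 0) ^+ 2.
  by apply: eq_bigr => k _; rewrite !mxE; ring.
have e2 : \sum_k (bv - alpha *: g - bv) k 0 ^+ 2 = \sum_k (alpha * g k 0) ^+ 2.
  by apply: eq_bigr => k _; rewrite !mxE; ring.
rewrite e1 e2 sq_expand sq_expand0 in hsq.
have h1 := Hmin v sv.
have h2 := Hsm v.
have h3 := HQ (v - bv).
set N2 := \sum_k (v - bv) k 0 ^+ 2 in hsq h3.
have N20 : 0 <= N2 by apply: sumr_ge0 => k _; exact: sqr_ge0.
set G := dotc g (v - bv) in hsq h2.
have hG : 0 <= 2 * G + Lf * N2 by lra.
have p1 := mulr_ge0 (ltW a0) hG.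
have p2 : 0 <= (1 - alpha * Lf) * N2 by rewrite mulr_ge0 // subr_ge0 ltW.
lra.
Qed.

Theorem theorem3p4 (R : realType) (n p1 p2 s1 s2 : nat) (l : loss_kind)
  (X : 'M[R]_(n, p1)) (Z : 'M[R]_(n, p2)) (y : 'cV[R]_n) (a b c : R)
  (Lf : R)
  (hn : (0 < n)%N) (ha : 0 < a) (hb : 0 < b) (hc : 0 < c)
  (hs1 : (1 <= s1 <= p1)%N) (hs2 : (1 <= s2 <= p2)%N)
  (hy : l = Llog -> forall i, y i 0 = 0 \/ y i 0 = 1)
  (hLf : is_lambda_max (Lmat l X Z a b c) Lf) :
  (forall (alpha : R) (b1 : 'cV[R]_p1) (b2 : 'cV[R]_p2), 0 < alpha ->
     alpha_stationary l X Z y a b c s1 s2 alpha b1 b2 ->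
     local_min l X Z y a b c s1 s2 b1 b2 /\
     ((l0 b1 < s1)%N -> (l0 b2 < s2)%N -> global_min l X Z y a b c s1 s2 b1 b2))
  /\
  (forall (b1 : 'cV[R]_p1) (b2 : 'cV[R]_p2),
     global_min l X Z y a b c s1 s2 b1 b2 ->
     forall alpha : R, 0 < alpha -> alpha * Lf < 1 ->
       alpha_stationary l X Z y a b c s1 s2 alpha b1 b2).
Proof.
have n0 : 0 <= n%:R^-1 :> R by rewrite invr_ge0 ler0n.
split.
- move=> alpha b1 b2 a0 [st1 st2].
  rewrite grad1E in st1; rewrite grad2E in st2.
  have z1 := stat_zero a0 st1; have z2 := stat_zero a0 st2.
  have sb1 := st1.1; have sb2 := st2.1.
  have cv := cvx_ineq l X Z y ha hb hc b1 b2.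
  split.
  + split; first by split.
    have S1 := Sinv_ge0 b1; have S2 := Sinv_ge0 b2.
    exists (Sinv b1 + Sinv b2 + 1)^-1; split; first by rewrite invr_gt0; lra.
    move=> u1 u2 [su1 su2] hd.
    set E1 := enorm (u1 - b1) in hd; set E2 := enorm (u2 - b2) in hd.
    have h1 : forall k, b1 k 0 != 0 -> u1 k 0 != 0.
      move=> k bk; apply/eqP => uk.
      have c1 := coord_le (u1 - b1) k (sqr_ge0 E2).
      have c2 := eps_le S2 bk.
      move: c1; rewrite mxE [X in `|_ + X|]mxE uk add0r normrN => c1.
      have := le_lt_trans c1 (lt_le_trans hd c2); by rewrite ltxx.
    have h2 : forall k, b2 k 0 != 0 -> u2 k 0 != 0.
      move=> k bk; apply/eqP => uk.
      have c1 := coord_le (u2 - b2) k (sqr_ge0 E1).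
      have c2 := eps_le S1 bk.
      move: c1; rewrite mxE [X in `|_ + X|]mxE uk add0r normrN addrC -/E2 => c1.
      move: c2; rewrite (addrC (Sinv b2)) => c2.
      have := le_lt_trans c1 (lt_le_trans hd c2); by rewrite ltxx.
    have d1 := dot_zero z1 sb1 su1 h1.
    have d2 := dot_zero z2 sb2 su2 h2.
    by have := cv u1 u2; rewrite d1 d2 !addr0.
  + move=> l1 l2; split; first by split.
    move=> u1 u2 _; have := cv u1 u2.
    have g1 : dotc (g1v l X Z y a c b1 b2) (u1 - b1) = 0.
      apply: big1 => k _; rewrite z1 ?mul0r //.
      by apply: leq_trans l1; rewrite -add1n leq_add2r leq_b1.
    have g2 : dotc (g2v l X Z y b c b1 b2) (u2 - b2) = 0.
      apply: big1 => k _; rewrite z2 ?mul0r //.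
      by apply: leq_trans l2; rewrite -add1n leq_add2r leq_b1.
    by rewrite g1 g2 !addr0.
- move=> b1 b2 [[sb1 sb2] H] alpha a0 aL.
  split; rewrite ?grad1E ?grad2E.
  + apply: (@proj_step R p1 s1 b1 _ alpha Lf (fun v => fobj l X Z y a b c v b2)
      (fun d => n%:R^-1 * ((a * kap R l + c) / 2 * \sum_i ((X *m d) i 0) ^+ 2))) => //.
    * by move=> v sv; apply: H.
    * by move=> v; apply: smooth1.
    * move=> d; have lb := lmax_bound (Lmat_sym l X Z a b c) hLf (col_mx d (0 : 'cV[R]_p2))^T.
      rewrite quad1 nr_col1 in lb; move: lb.
      set Q := \sum_i ((X *m d) i 0) ^+ 2; move=> lb.
      have -> : 2 * (n%:R^-1 * ((a * kap R l + c) / 2 * Q)) = n%:R^-1 * (a * kap R l + c) * Q.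
        by move: (n%:R^-1) (a * kap R l + c) => m K; field.
      exact: lb.
  + apply: (@proj_step R p2 s2 b2 _ alpha Lf (fun v => fobj l X Z y a b c b1 v)
      (fun d => n%:R^-1 * ((b * kap R l + c) / 2 * \sum_i ((Z *m d) i 0) ^+ 2))) => //.
    * by move=> v sv; apply: H.
    * by move=> v; apply: smooth2.
    * move=> d; have lb := lmax_bound (Lmat_sym l X Z a b c) hLf (col_mx (0 : 'cV[R]_p1) d)^T.
      rewrite quad2 nr_col2 in lb; move: lb.
      set Q := \sum_i ((Z *m d) i 0) ^+ 2; move=> lb.
      have -> : 2 * (n%:R^-1 * ((b * kap R l + c) / 2 * Q)) = n%:R^-1 * (b * kap R l + c) * Q.
        by move: (n%:R^-1) (b * kap R l + c) => m K; field.
      exact: lb.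
Qed.
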